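(* Let $D,W,V,K$ be positive integers, $N:=W+VK$, and let $\mathcal{D}\in\mathbb{R}^{W\times VK}$ with $\mathrm{rank}(\mathcal{D})=D$ and $\mathrm{rank}(\mathcal{D}_{1:D,1:D})=D$. Fix $\sharp\in\{\mathrm{st},\mathrm{m}\}$ and index pairs $\theta^{(\sharp)}(1),\dots,\theta^{(\sharp)}(J)$, lying in $\{1,\dots,W\}^{\times2}$ if $\sharp=\mathrm{st}$ and in $\{1,\dots,VK\}^{\times2}$ if $\sharp=\mathrm{m}$, together with known values $c_1,\dots,c_J\in\mathbb{R}$. A matrix $G\in\mathbb{R}^{N\times N}$ is called compatible with the a priori knowledge if $G=P^TP$ for some $P=(P_{\mathrm{st}}\,|\,P_{\mathrm{m}})$ with $P_{\mathrm{st}}\in\mathbb{R}^{D\times W}$, $P_{\mathrm{m}}\in\mathbb{R}^{D\times VK}$, such that $P_{\mathrm{st}}^TP_{\mathrm{m}}=\mathcal{D}$ and $(G_\sharp)_{\theta^{(\sharp)}(j)}=c_j$ for $j=1,\dots,J$, where $G_{\mathrm{st}}=P_{\mathrm{st}}^TP_{\mathrm{st}}$ and $G_{\mathrm{m}}=P_{\mathrm{m}}^TP_{\mathrm{m}}$; assume that at least one compatible $G$ exists. Define $\mathcal{M}:=\bigl(\mathrm{vec}(\mathcal{N}^{(\sharp)}_1)\,|\cdots|\,\mathrm{vec}(\mathcal{N}^{(\sharp)}_J)\bigr)$, where $$\mathcal{N}^{(\mathrm{st})}_j:=\tfrac12\Bigl(\bigl(\mathcal{D}_{\theta^{(\mathrm{st})}(j)_1,1:D}\bigr)^T\mathcal{D}_{\theta^{(\mathrm{st})}(j)_2,1:D}+\bigl(\mathcal{D}_{\theta^{(\mathrm{st})}(j)_2,1:D}\bigr)^T\mathcal{D}_{\theta^{(\mathrm{st})}(j)_1,1:D}\Bigr),$$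 $$\mathcal{N}^{(\mathrm{m})}_j:=\tfrac12\Bigl(\mathcal{D}_{1:D,\theta^{(\mathrm{m})}(j)_1}\bigl(\mathcal{D}_{1:D,\theta^{(\mathrm{m})}(j)_2}\bigr)^T+\mathcal{D}_{1:D,\theta^{(\mathrm{m})}(j)_2}\bigl(\mathcal{D}_{1:D,\theta^{(\mathrm{m})}(j)_1}\bigr)^T\Bigr).$$ Then the following are equivalent: (i) there exists only one matrix $G$ with $\mathrm{rank}(G)=D$ which is compatible with the a priori knowledge; (ii) $\mathrm{rank}(\mathcal{M})=D(D+1)/2$.
   Context: $\mathcal{D}_{1:D,1:D}$ is the top-left $D\times D$ submatrix of $\mathcal{D}$; $\mathcal{D}_{i,1:D}$ is the row vector formed by the first $D$ entries of row $i$ of $\mathcal{D}$; $\mathcal{D}_{1:D,l}$ is the column vector formed by the first $D$ entries of column $l$ of $\mathcal{D}$. For an index pair $\theta(j)$, $\theta(j)_1,\theta(j)_2$ denote its two components. $\mathrm{vec}(X)$ stacks the columns of $X$ into a single column vector. *)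

(* Defs.v *)
From HB Require Import structures.
From mathcomp Require Import all_boot all_order all_algebra.
From mathcomp Require Import reals.
Set Implicit Arguments. Unset Strict Implicit. Unset Printing Implicit Defensive.
Import Order.TTheory GRing.Theory Num.Theory.
Local Open Scope ring_scope.

Section Defs.
Variable R : realType.

(* Entry of a matrix at 0-based nat indices (i, j); 0 if out of range.
   Used to express D_{1:D,1:D}, D_{i,1:D}, D_{1:D,l} without dependent
   bound proofs (indices are always in range under the theorem's hypotheses). *)
Definition mxe {m n} (A : 'M[R]_(m, n)) (i j : nat) : R :=
  match (insub i : option 'I_m), (insub j : option 'I_n) with
  | Some i', Some j' => A i' j'
  | _, _ => 0
  end.

Definition topleft (D : nat) {m n} (A : 'M[R]_(m, n)) : 'M[R]_D :=
  \matrix_(k < D, l < D) mxe A k l.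
Definition rowD (D : nat) {m n} (A : 'M[R]_(m, n)) (i : nat) : 'rV[R]_D :=
  \row_(l < D) mxe A i l.
Definition colD (D : nat) {m n} (A : 'M[R]_(m, n)) (l : nat) : 'cV[R]_D :=
  \col_(k < D) mxe A k l.

Inductive sharp := St | Mo.

(* range of the (0-based) indices of theta *)
Definition bnd (s : sharp) (W n : nat) : nat := if s is St then W else n.

Definition Nst (D : nat) {m n} (A : 'M[R]_(m, n)) (p : nat * nat) : 'M[R]_D :=
  2^-1 *: ((rowD D A p.1)^T *m rowD D A p.2 + (rowD D A p.2)^T *m rowD D A p.1).
Definition Nm (D : nat) {m n} (A : 'M[R]_(m, n)) (p : nat * nat) : 'M[R]_D :=
  2^-1 *: (colD D A p.1 *m (colD D A p.2)^T + colD D A p.2 *m (colD D A p.1)^T).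
Definition Nsh (s : sharp) (D : nat) {m n} (A : 'M[R]_(m, n)) (p : nat * nat)
  : 'M[R]_D := if s is St then Nst D A p else Nm D A p.

(* vec: column stacking *)
Definition vecmx {m n} (X : 'M[R]_(m, n)) : 'cV[R]_(n * m) := (mxvec X^T)^T.

Definition Mcal (s : sharp) (D : nat) {m n J} (A : 'M[R]_(m, n))
  (theta : 'I_J -> nat * nat) : 'M[R]_(D * D, J) :=
  \matrix_(k, j) vecmx (Nsh s D A (theta j)) k 0.

Definition compatible (s : sharp) (D W n J : nat) (A : 'M[R]_(W, n))
  (theta : 'I_J -> nat * nat) (c : 'I_J -> R) (G : 'M[R]_(W + n)) : Prop :=
  exists (Pst : 'M[R]_(D, W)) (Pm : 'M[R]_(D, n)),
    [/\ G = (row_mx Pst Pm)^T *m row_mx Pst Pm,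
        Pst^T *m Pm = A
      & forall j : 'I_J,
          match s with
          | St => mxe (Pst^T *m Pst) (theta j).1 (theta j).2
          | Mo => mxe (Pm^T *m Pm) (theta j).1 (theta j).2
          end = c j].

End Defs.

(* Main.v *)
Require Import Defs.
From HB Require Import structures.
From mathcomp Require Import all_boot all_order all_algebra.
From mathcomp Require Import reals.
From mathcomp Require Import ring lra zify.
Set Implicit Arguments. Unset Strict Implicit. Unset Printing Implicit Defensive.
Import Order.TTheory GRing.Theory Num.Theory.
Local Open Scope ring_scope.

Section Chol.
Variable R : realType.

Definition posdef n (M : 'M[R]_n) :=
  forall x : 'rV[R]_n, x != 0 -> 0 < (x *m M *m x^T) 0 0.

Lemma quad_block n (a : 'M[R]_1) (b : 'M[R]_(1, n)) (d : 'M[R]_n)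
  (u : 'rV[R]_1) (y : 'rV[R]_n) :
  row_mx u y *m block_mx a b b^T d *m (row_mx u y)^T =
  u *m a *m u^T + u *m b *m y^T + y *m b^T *m u^T + y *m d *m y^T.
Proof.
rewrite tr_row_mx mul_row_block mul_row_col !mulmxDl !addrA.
by rewrite -!addrA (addrCA (y *m b^T *m u^T)).
Qed.

Lemma cholesky n (M : 'M[R]_n) : M^T = M -> posdef M ->
  exists Q : 'M[R]_n, M = Q^T *m Q.
Proof.
elim: n M => [|n IH] M.
  by move=> _ _; exists 0; apply/matrixP => [[]].
move: M; change (forall M : 'M[R]_(1 + n), M^T = M -> posdef M ->
  exists Q : 'M[R]_(1 + n), M = Q^T *m Q).
move=> M Msym Mpd.
have eM : M = block_mx (ulsubmx M) (ursubmx M) (ursubmx M)^T (drsubmx M).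
  have h := submxK M.
  rewrite -[in LHS]h; congr block_mx.
  rewrite -{1}Msym -{1}h tr_block_mx block_mxKdl.
  by rewrite -{2}h block_mxKur.
set a := ulsubmx M; set b := ursubmx M; set d := drsubmx M.
have dsym : d^T = d.
  have := Msym; rewrite {1}eM tr_block_mx => h.
  by rewrite /d -{2}h block_mxKdr.
pose al := a 0 0.
have ea : a = al%:M by apply: mx11_scalar.
have alpos : 0 < al.
  have x0 : row_mx (1 : 'rV[R]_1) (0 : 'rV[R]_n) != 0.
    apply/eqP => /matrixP/(_ 0 (lshift n 0)).
    by rewrite row_mxEl !mxE /= => /eqP; rewrite oner_eq0.
  have := Mpd _ x0; rewrite eM quad_block trmx0 !mul0mx !mulmx0 !addr0.
  by rewrite mul1mx trmx1 mulmx1.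
have al0 : al != 0 by rewrite gt_eqF.
pose d' := d - al^-1 *: (b^T *m b).
have d'sym : d'^T = d'.
  by rewrite /d' linearD /= linearN /= linearZ /= trmx_mul trmxK dsym.
have d'pd : posdef d'.
  move=> y y0.
  pose z := y *m b^T.
  pose u := - al^-1 *: z.
  have x0 : row_mx u y != 0.
    apply: contraNneq y0 => h.
    by case: (eq_row_mx (etrans h (esym (row_mx0 _ _ _ _)))) => _ ->.
  have := Mpd _ x0; rewrite eM quad_block.
  have e1 : u *m b *m y^T = u *m z^T by rewrite -mulmxA /z trmx_mul trmxK.
  have e2 : y *m b^T *m u^T = z *m u^T by [].
  rewrite e1 e2 /d' mulmxBr mulmxBl -!scalemxAr -!scalemxAl.
  have e3 : y *m (b^T *m b) *m y^T = z *m z^T.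
    by rewrite /z trmx_mul trmxK !mulmxA.
  rewrite e3 -/a ea /u -/d.
  have ez : z = (z 0 0)%:M := mx11_scalar z.
  rewrite ez; set ze := z 0 0; set w := y *m d *m y^T.
  rewrite !linearZ /= !tr_scalar_mx.
  rewrite -!scalar_mxM !scale_scalar_mx !mxE /= !mulr1n.
  have key : forall S : R, - al^-1 * (- al^-1 * (ze * al * ze)) + - al^-1 * (ze * ze)
     + - al^-1 * (ze * ze) + S = S + al^-1 * - (ze * ze).
    by move=> S; field.
  by rewrite key.
have [L eL] := IH d' d'sym d'pd.
pose sa := Num.sqrt al.
have sa0 : sa != 0 by rewrite gt_eqF // sqrtr_gt0.
have sa2 : sa * sa = al by rewrite -expr2 sqr_sqrtr // ltW.
exists (block_mx sa%:M (sa^-1 *: b) 0 L).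
rewrite tr_block_mx mulmx_block {1}eM !trmx0 !mul0mx !mulmx0 !addr0.
rewrite tr_scalar_mx -scalar_mxM sa2 -ea mul_scalar_mx scalerA mulfV // scale1r.
rewrite !linearZ /= mul_mx_scalar scalerA mulfV // scale1r.
rewrite -eL /d' -scalemxAl scalerA -invfM sa2 addrC subrK.
by [].
Qed.

Lemma quadE n (x : 'rV[R]_n) (F : 'M[R]_n) :
  (x *m F *m x^T) 0 0 = \sum_i \sum_j x 0 i * F i j * x 0 j.
Proof.
rewrite mxE; under eq_bigr => j _ do rewrite !mxE mulr_suml.
by rewrite exchange_big.
Qed.

Lemma sqE n (x : 'rV[R]_n) : (x *m x^T) 0 0 = \sum_i x 0 i * x 0 i.
Proof. by rewrite mxE; apply: eq_bigr => i _; rewrite mxE. Qed.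

Lemma sq_ge0 n (x : 'rV[R]_n) : 0 <= (x *m x^T) 0 0.
Proof. by rewrite sqE sumr_ge0 // => i _; rewrite -expr2 sqr_ge0. Qed.

Lemma sq_eq0 n (x : 'rV[R]_n) : (x *m x^T) 0 0 = 0 -> x = 0.
Proof.
rewrite sqE => /psumr_eq0P h.
have {}h : forall i, x 0 i * x 0 i = 0.
  by move=> i; apply: h => // k _; rewrite -expr2 sqr_ge0.
apply/rowP => i; rewrite mxE; apply/eqP.
by have /eqP := h i; rewrite mulf_eq0 orbb.
Qed.

Lemma sq_gt0 n (x : 'rV[R]_n) : x != 0 -> 0 < (x *m x^T) 0 0.
Proof.
move=> x0; rewrite lt_def sq_ge0 andbT; apply: contraNneq x0 => h.
by apply/eqP/sq_eq0.
Qed.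

Lemma posdef_unit n (Q : 'M[R]_n) : posdef (Q^T *m Q) -> Q \in unitmx.
Proof.
move=> pd; apply: contraT => nu.
have : kermx Q^T != 0 by rewrite kermx_eq0 row_free_unit unitmx_tr.
case/rowV0Pn => v /sub_kermxP vQ v0.
have := pd v v0; rewrite mulmxA vQ mul0mx mul0mx mxE.
by rewrite ltxx.
Qed.

Lemma posdef_perturb n (F : 'M[R]_n) :
  exists t, 0 < t /\ posdef (1%:M + t *: F).
Proof.
pose c := \sum_i \sum_j `|F i j|.
have c0 : 0 <= c by rewrite sumr_ge0 // => i _; rewrite sumr_ge0.
exists (1 + c)^-1; split; first by rewrite invr_gt0 ltr_wpDr.
move=> x x0.
set s := (x *m x^T) 0 0.
have s0 : 0 < s by apply: sq_gt0.
have hk : forall k, x 0 k * x 0 k <= s.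
  move=> k; rewrite /s sqE (bigD1 k) //= lerDl sumr_ge0 // => i _.
  by rewrite -expr2 sqr_ge0.
have hb : - (c * s) <= (x *m F *m x^T) 0 0.
  rewrite quadE /c mulr_suml -sumrN; apply: ler_sum => i _.
  rewrite mulr_suml -sumrN; apply: ler_sum => j _.
  apply: lerNnormlW; rewrite !normrM.
  have ha : `|x 0 i| * `|x 0 i| <= s by rewrite -normrM ger0_norm ?hk // -expr2 sqr_ge0.
  have hb : `|x 0 j| * `|x 0 j| <= s by rewrite -normrM ger0_norm ?hk // -expr2 sqr_ge0.
  have hab : `|x 0 i| * `|x 0 j| <= s.
    have := normr_ge0 (x 0 i); have := normr_ge0 (x 0 j); nra.
  by rewrite [_ * `|F i j|]mulrC -mulrA ler_wpM2l.
rewrite mulmxDr mulmxDl mulmx1 -scalemxAr -scalemxAl mxE [X in _ + X]mxE -/s.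
have ht : 0 < (1 + c)^-1 by rewrite invr_gt0 ltr_wpDr.
have : (1 + c)^-1 * - (c * s) <= (1 + c)^-1 * (x *m F *m x^T) 0 0.
  by rewrite ler_wpM2l // ltW.
have : s + (1 + c)^-1 * - (c * s) = s / (1 + c).
  field; apply/lt0r_neq0; rewrite ltr_wpDr //.
have : 0 < s / (1 + c) by rewrite divr_gt0 // ltr_wpDr.
lra.
Qed.
End Chol.

Definition lowp n := [pred p : 'I_n * 'I_n | (p.2 <= p.1)%N].

Lemma card_lowp n : #|lowp n| = ((n * n.+1) %/ 2)%N.
Proof.
rewrite -sum1_card.
have -> : (\sum_(p in lowp n) 1 = \sum_(i < n) \sum_(j < n | (j < i.+1)%N) 1)%N.
  by rewrite pair_big_dep; apply: eq_bigl => p.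
have -> : (\sum_(i < n) \sum_(j < n | (j < i.+1)%N) 1 = \sum_(i < n) i.+1)%N.
  apply: eq_bigr => i _.
  have := big_ord_narrow_cond (op := addn) (idx := 0%N) (P := predT) (F := fun _ => 1%N) (ltn_ord i).
  rewrite /= => h.
  rewrite (eq_bigl (fun j : 'I_n => predT j && (j < i.+1)%N)) // h.
  by rewrite sum_nat_const card_ord muln1.
rewrite mulnC.
have := bin2_sum n.+1; rewrite big_mkord big_ord_recl /= add0n bin2 /= -divn2.
move=> <-.
by apply: eq_bigr.
Qed.

Section Sym.
Variable R : realType.
Variable n : nat.

Definition Ymx : 'M[R]_(#|lowp n|, n * n) :=
  \matrix_(r, k) mxvec (delta_mx (enum_val r).1 (enum_val r).2
                       + delta_mx (enum_val r).2 (enum_val r).1) 0 k.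

Lemma YmxE r i j : Ymx r (mxvec_index i j) =
  ((i == (enum_val r).1) && (j == (enum_val r).2))%:R
  + ((i == (enum_val r).2) && (j == (enum_val r).1))%:R.
Proof. by rewrite mxE mxvecE !mxE. Qed.

Definition symv (u : 'rV[R]_(n * n)) := (vec_mx u)^T = vec_mx u.

Lemma symvP u : symv u <->
  forall i j, u 0 (mxvec_index i j) = u 0 (mxvec_index j i).
Proof.
split=> [h i j|h].
  by have := congr1 (fun M : 'M[R]_n => M j i) h; rewrite !mxE.
by apply/matrixP => i j; rewrite !mxE h.
Qed.

Lemma Ymx_sym u : (u <= Ymx)%MS -> symv u.
Proof.
case/submxP => w ->; apply/symvP => i j.
rewrite !mxE; apply: eq_bigr => r _; rewrite !YmxE; congr (_ * _).
by rewrite addrC; congr (_ + _); rewrite andbC.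
Qed.

Lemma lowp_eq (p q : 'I_n * 'I_n) : p \in lowp n -> q \in lowp n ->
  p.1 = q.2 -> p.2 = q.1 -> p = q.
Proof.
case: p q => [a b] [c d]; rewrite !inE /= => h1 h2 e1 e2.
have e3 : a = b.
  apply/val_inj/eqP; rewrite eqn_leq h1 /=.
  by rewrite andbT e1 e2.
by rewrite -e2 -e3 -e1.
Qed.

Lemma Ymx_free : row_free Ymx.
Proof.
apply: inj_row_free => v hv; apply/rowP => r0.
have p0 := enum_valP r0.
set p := enum_val r0 in p0.
have := congr1 (fun x : 'rV[R]_(n * n) => x 0 (mxvec_index p.1 p.2)) hv.
rewrite mxE (bigD1 r0) //= big1 ?addr0.
  rewrite YmxE -/p !eqxx /= !mxE => /eqP; rewrite mulf_eq0 => /orP[/eqP //|].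
  by rewrite gt_eqF // ltr_pwDl.
move=> r nr; rewrite YmxE.
have pr := enum_valP r.
have e1 : ((p.1 == (enum_val r).1) && (p.2 == (enum_val r).2)) = false.
  apply: negbTE; apply: contra nr => /andP[/eqP e1 /eqP e2].
  apply/eqP/enum_val_inj; rewrite -/p.
  by rewrite [enum_val r]surjective_pairing -e1 -e2 -surjective_pairing.
have e2 : ((p.1 == (enum_val r).2) && (p.2 == (enum_val r).1)) = false.
  apply: negbTE; apply: contra nr => /andP[/eqP f1 /eqP f2].
  apply/eqP/enum_val_inj; rewrite -/p.
  by apply: lowp_eq; rewrite // f1 f2.
by rewrite e1 e2 addr0 mulr0.
Qed.

Lemma ind0 (i j : 'I_n) (p : 'I_n * 'I_n) : p != (i, j) -> p != (j, i) ->
  ((i == p.1) && (j == p.2))%:R + ((i == p.2) && (j == p.1))%:R = 0 :> R.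
Proof.
case: p => a b /= h1 h2.
have -> : ((i == a) && (j == b)) = false.
  by apply: negbTE; apply: contra h1 => /andP[/eqP <- /eqP <-].
have -> : ((i == b) && (j == a)) = false.
  by apply: negbTE; apply: contra h2 => /andP[/eqP <- /eqP <-].
by rewrite addr0.
Qed.

Lemma sym_Ymx u : symv u -> (u <= Ymx)%MS.
Proof.
move/symvP=> us.
pose g (p : 'I_n * 'I_n) := if p.1 == p.2 then u 0 (mxvec_index p.1 p.2) / 2
                           else u 0 (mxvec_index p.1 p.2).
apply/submxP; exists (\row_r g (enum_val r)).
apply/rowP => k; case/mxvec_indexP: k => i j.
rewrite mxE.
have -> : \sum_r (\row_r g (enum_val r)) 0 r * Ymx r (mxvec_index i j) =
  \sum_(p in lowp n) g p * (((i == p.1) && (j == p.2))%:R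
                            + ((i == p.2) && (j == p.1))%:R).
  by rewrite [RHS]big_enum_val; apply: eq_bigr => r _; rewrite mxE YmxE.
case: (ltngtP i j) => hij.
- have hin : (j, i) \in lowp n by rewrite inE /= ltnW.
  rewrite (bigD1 (j, i)) //= big1 ?addr0.
    have nij : (i == j) = false by apply: ltn_eqF.
    rewrite /g /= eq_sym nij /= !eqxx add0r mulr1.
    by rewrite us.
  move=> p /andP[pl pn]; rewrite ind0 ?mulr0 //.
  apply: contraTneq pl => ->; rewrite inE /= -ltnNge //.
- have hin : (i, j) \in lowp n by rewrite inE /= ltnW.
  rewrite (bigD1 (i, j)) //= big1 ?addr0.
    have nij : (i == j) = false by apply: gtn_eqF.
    by rewrite /g /= nij !eqxx /= addr0 mulr1.
  move=> p /andP[pl pn]; rewrite ind0 ?mulr0 //.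
  apply: contraTneq pl => ->; rewrite inE /= -ltnNge //.
- have eij : i = j by apply: val_inj.
  subst j.
  have hin : (i, i) \in lowp n by rewrite inE /=.
  rewrite (bigD1 (i, i)) //= big1 ?addr0.
    rewrite /g /= !eqxx /=.
    have h2 : (1 + 1 : R) = 2 by [].
    by rewrite h2 mulfVK // pnatr_eq0.
  by move=> p /andP[pl pn]; rewrite ind0 ?mulr0.
Qed.

Lemma rankY : \rank Ymx = ((n * n.+1) %/ 2)%N.
Proof. by rewrite (eqP Ymx_free) card_lowp. Qed.

Lemma symrank J (U : 'M[R]_(J, n * n)) : (forall j, symv (row j U)) ->
  (\rank U = ((n * n.+1) %/ 2)%N <->
   forall u, symv u -> u *m U^T = 0 -> u = 0).
Proof.
move=> hU.
have UY : (U <= Ymx)%MS by apply/row_subP => j; apply: sym_Ymx.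
split.
  move=> rU u su uU.
  have YU : (Ymx <= U)%MS.
    have [_ <-] := mxrank_leqif_sup UY.
    by rewrite rU rankY.
  have : (u <= U)%MS := submx_trans (sym_Ymx su) YU.
  case/submxP => w ew.
  apply: sq_eq0.
  have -> : u *m u^T = w *m (u *m U^T)^T.
    by rewrite trmx_mul trmxK {1}ew mulmxA.
  by rewrite uU trmx0 mulmx0 mxE.
move=> h; apply/eqP; rewrite eqn_leq.
rewrite -{1}rankY mxrankS //=.
rewrite leqNgt; apply/negP => lt.
set Z := (Ymx :&: kermx U^T)%MS.
have hZ : (0 < \rank Z)%N.
  have e := mxrank_sum_cap Ymx (kermx U^T).
  have l1 := rank_leq_col (Ymx + kermx U^T)%MS.
  have l2 := rank_leq_col U.
  move: e l1 l2 lt; rewrite mxrank_ker mxrank_tr rankY -/Z.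
  lia.
have : Z != 0 by rewrite -mxrank_eq0 -lt0n.
case/rowV0Pn => v vZ v0.
have vY : (v <= Ymx)%MS := submx_trans vZ (capmxSl _ _).
have vK : (v <= kermx U^T)%MS := submx_trans vZ (capmxSr _ _).
move/sub_kermxP: vK => vU.
by move: v0; rewrite (h v (Ymx_sym vY) vU) eqxx.
Qed.
End Sym.

Section P4.
Variable R : realType.

Definition Sel (p D : nat) : 'M[R]_(p, D) := \matrix_(i, j) ((i : nat) == j)%:R.

Lemma mulSelE m p D (h : (D <= p)%N) (M : 'M[R]_(m, p)) i k :
  (M *m Sel p D) i k = M i (widen_ord h k).
Proof.
rewrite mxE (bigD1 (widen_ord h k)) //= mxE eqxx mulr1 big1 ?addr0 //.
move=> j /negbTE nj; rewrite mxE.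
have -> : ((j : nat) == k) = false by rewrite -nj.
by rewrite mulr0.
Qed.

Lemma SelTmulE m p D (h : (D <= p)%N) (M : 'M[R]_(p, m)) k i :
  ((Sel p D)^T *m M) k i = M (widen_ord h k) i.
Proof.
rewrite -[_ *m _]trmxK trmx_mul trmxK mxE mulSelE mxE.
by [].
Qed.

Lemma mxeE m n (M : 'M[R]_(m, n)) (i : 'I_m) (j : 'I_n) : mxe M i j = M i j.
Proof. by rewrite /mxe !valK. Qed.

Lemma rowD_E p q D (h : (D <= q)%N) (A : 'M[R]_(p, q)) (i : 'I_p) :
  rowD D A i = row i A *m Sel q D.
Proof.
apply/rowP => l; rewrite mulSelE !mxE.
by rewrite (mxeE A i (widen_ord h l)).
Qed.

Lemma topleft_E p q D (hp : (D <= p)%N) (hq : (D <= q)%N) (A : 'M[R]_(p, q)) :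
  topleft D A = (Sel p D)^T *m A *m Sel q D.
Proof.
apply/matrixP => k l; rewrite mulSelE SelTmulE !mxE.
by rewrite (mxeE A (widen_ord hp k) (widen_ord hq l)).
Qed.

Lemma sum_idx m n (F : 'I_(m * n) -> R) :
  \sum_k F k = \sum_i \sum_j F (mxvec_index i j).
Proof.
rewrite pair_bigA /=.
rewrite (reindex (uncurry (@mxvec_index m n))) /=.
  by apply: eq_bigr => -[].
exact: curry_mxvec_bij.
Qed.


Definition frob D (E N : 'M[R]_D) := \sum_i \sum_l E i l * N l i.

Lemma McalE s D m n J (A : 'M[R]_(m, n)) (theta : 'I_J -> nat * nat)
  (u : 'rV[R]_(D * D)) j :
  (u *m Mcal s D A theta) 0 j = frob (vec_mx u) (Nsh s D A (theta j)).
Proof.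
rewrite mxE sum_idx /frob; apply: eq_bigr => i _; apply: eq_bigr => l _.
by rewrite !mxE mxvecE mxE.
Qed.

Lemma Nsh_sym s D m n (A : 'M[R]_(m, n)) p : (Nsh s D A p)^T = Nsh s D A p.
Proof.
case: s => /=; rewrite /Nst /Nm linearZ /= linearD /= !trmx_mul !trmxK;
by rewrite addrC.
Qed.

Lemma bilE D (r s : 'rV[R]_D) (E : 'M[R]_D) :
  (r *m E *m s^T) 0 0 = \sum_i \sum_l r 0 i * E i l * s 0 l.
Proof.
rewrite mxE; under eq_bigr => j _ do rewrite !mxE mulr_suml.
by rewrite exchange_big.
Qed.

Lemma frob_st D m n (A : 'M[R]_(m, n)) p (E : 'M[R]_D) : E^T = E ->
  frob E (Nst D A p) = (rowD D A p.1 *m E *m (rowD D A p.2)^T) 0 0.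
Proof.
move=> Esym.
have Es : forall i l, E l i = E i l.
  by move=> i l; rewrite -{1}Esym mxE.
set r := rowD D A p.1; set t := rowD D A p.2.
rewrite bilE /frob /Nst.
have e1 : \sum_i \sum_l E i l * (r 0 l * t 0 i) =
          \sum_i \sum_l r 0 i * E i l * t 0 l.
  rewrite exchange_big; apply: eq_bigr => i _; apply: eq_bigr => l _.
  by rewrite Es; ring.
have e2 : \sum_i \sum_l E i l * (t 0 l * r 0 i) =
          \sum_i \sum_l r 0 i * E i l * t 0 l.
  by apply: eq_bigr => i _; apply: eq_bigr => l _; ring.
have e3 : \sum_i \sum_l E i l * (2^-1 *: (r^T *m t + t^T *m r)) l i =
  2^-1 * (\sum_i \sum_l E i l * (r 0 l * t 0 i))
  + 2^-1 * (\sum_i \sum_l E i l * (t 0 l * r 0 i)).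
  rewrite !mulr_sumr -big_split; apply: eq_bigr => i _.
  rewrite !mulr_sumr -big_split; apply: eq_bigr => l _.
  rewrite !mxE !big_ord1 !mxE.
  rewrite [RHS]/=.
  ring.
rewrite e3 e1 e2; lra.
Qed.


Lemma rank_crit s D m n J (A : 'M[R]_(m, n)) (theta : 'I_J -> nat * nat) :
  \rank (Mcal s D A theta) = ((D * D.+1) %/ 2)%N <->
  (forall E : 'M[R]_D, E^T = E ->
     (forall j, frob E (Nsh s D A (theta j)) = 0) -> E = 0).
Proof.
rewrite -mxrank_tr.
have hU : forall j, symv (row j (Mcal s D A theta)^T).
  move=> j; apply/symvP => i l; rewrite !mxE !mxvecE !mxE.
  by rewrite -[in LHS](Nsh_sym s D A (theta j)) mxE.
rewrite (symrank hU) trmxK; split.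
  move=> h E Es hE.
  have h0 : mxvec E = 0.
    apply: h; first by rewrite /symv mxvecK.
    by apply/rowP => j; rewrite McalE mxvecK hE mxE.
  by rewrite -(mxvecK E) h0; apply/matrixP => i l; rewrite !mxE.
move=> h u su uM.
have h0 : vec_mx u = 0.
  by apply: h => // j; rewrite -McalE uM mxE.
by rewrite -(vec_mxK u) h0 linear0.
Qed.

End P4.

Lemma invmxM (R : realType) n (A B : 'M[R]_n) : A \in unitmx -> B \in unitmx ->
  invmx (A *m B) = invmx B *m invmx A.
Proof.
move=> uA uB; have uAB : A *m B \in unitmx by rewrite unitmx_mul uA uB.
rewrite -[invmx B *m invmx A]mul1mx -(mulVmx uAB) -!mulmxA (mulmxA B).
by rewrite mulmxV // mul1mx mulmxV // mulmx1.
Qed.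

Section GT.
Variable R : realType.
Variables (D p q J : nat) (A : 'M[R]_(p, q)) (theta : 'I_J -> nat * nat)
  (c : 'I_J -> R).
Hypotheses (hp : (D <= p)%N) (hq : (D <= q)%N) (hsub : \rank (topleft D A) = D)
  (htheta : forall j, ((theta j).1 < p)%N /\ ((theta j).2 < p)%N).

Definition gcomp (X : 'M[R]_(D, p)) (Y : 'M[R]_(D, q)) :=
  X^T *m Y = A /\ forall j, mxe (X^T *m X) (theta j).1 (theta j).2 = c j.

Local Notation SP := (Sel R p D).
Local Notation SQ := (Sel R q D).
Local Notation A0 := (topleft D A).

Lemma A0unit : A0 \in unitmx.
Proof. by rewrite -row_full_unit /row_full hsub. Qed.

Lemma gA0 (X : 'M[R]_(D, p)) (Y : 'M[R]_(D, q)) : X^T *m Y = A -> A0 = (X *m SP)^T *m (Y *m SQ).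
Proof. by move=> hXY; rewrite (topleft_E hp hq) -hXY trmx_mul !mulmxA. Qed.

Lemma gunit (X : 'M[R]_(D, p)) (Y : 'M[R]_(D, q)) : X^T *m Y = A -> (Y *m SQ \in unitmx) /\ (X *m SP \in unitmx).
Proof.
move=> hXY; have := A0unit; rewrite (gA0 hXY) unitmx_mul unitmx_tr.
by case/andP.
Qed.

Lemma gXT (X : 'M[R]_(D, p)) (Y : 'M[R]_(D, q)) : X^T *m Y = A -> X^T = A *m SQ *m invmx (Y *m SQ).
Proof.
move=> hXY; have [uB _] := gunit hXY.
by rewrite -hXY -(mulmxA X^T) mulmxK.
Qed.

Lemma gY (X : 'M[R]_(D, p)) (Y : 'M[R]_(D, q)) : X^T *m Y = A ->
  Y = (Y *m SQ) *m (invmx A0 *m SP^T *m A).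
Proof.
move=> hXY; have [uB uC] := gunit hXY.
have e : SP^T *m A = (X *m SP)^T *m Y by rewrite -hXY trmx_mul mulmxA.
rewrite -!mulmxA e (gA0 hXY) invmxM ?unitmx_tr //.
rewrite !mulmxA mulmxV // mul1mx mulVmx ?unitmx_tr //.
by rewrite mul1mx.
Qed.

Lemma entry_rows m k (P : 'M[R]_(m, k)) (S : 'M[R]_k) i j :
  (P *m S *m P^T) i j = (row i P *m S *m (row j P)^T) 0 0.
Proof.
rewrite !mxE; apply: eq_bigr => l _; rewrite !mxE; congr (_ * _).
by apply: eq_bigr => l' _; rewrite !mxE.
Qed.

Lemma gval (X : 'M[R]_(D, p)) (Y : 'M[R]_(D, q)) (S : 'M[R]_D) j : X^T *m Y = A ->
  mxe (X^T *m S *m X) (theta j).1 (theta j).2 =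
  (rowD D A (theta j).1 *m (invmx (Y *m SQ) *m S *m (invmx (Y *m SQ))^T)
     *m (rowD D A (theta j).2)^T) 0 0.
Proof.
move=> hXY; have [h1 h2] := htheta j.
have -> : mxe (X^T *m S *m X) (theta j).1 (theta j).2 =
          mxe (X^T *m S *m X) (Ordinal h1) (Ordinal h2) by [].
rewrite mxeE -{2}(trmxK X) entry_rows (gXT hXY).
rewrite (rowD_E hq A (Ordinal h1)) (rowD_E hq A (Ordinal h2)) !row_mul.
by rewrite !trmx_mul !mulmxA.
Qed.


Lemma mxeD m n (M N : 'M[R]_(m, n)) i j : mxe (M + N) i j = mxe M i j + mxe N i j.
Proof.
rewrite /mxe; case: (insub i : option 'I_m) => [i'|]; case: (insub j : option 'I_n) => [j'|] //=;
by rewrite ?mxE ?addr0.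
Qed.

Lemma BtB (B : 'M[R]_D) : B \in unitmx ->
  B^T *m B = invmx (invmx B *m (invmx B)^T).
Proof.
move=> uB; rewrite invmxM ?unitmx_tr ?unitmx_inv // trmx_inv.
by rewrite !invmxK.
Qed.

Lemma gXX (X : 'M[R]_(D, p)) (Y : 'M[R]_(D, q)) : X^T *m Y = A ->
  X^T *m X = (A *m SQ) *m (invmx (Y *m SQ) *m (invmx (Y *m SQ))^T)
             *m (A *m SQ)^T.
Proof.
move=> hXY; rewrite -[X in _ *m X]trmxK (gXT hXY).
by rewrite trmx_mul !mulmxA.
Qed.

Lemma gYY (X : 'M[R]_(D, p)) (Y : 'M[R]_(D, q)) : X^T *m Y = A ->
  Y^T *m Y = (invmx A0 *m SP^T *m A)^T *m ((Y *m SQ)^T *m (Y *m SQ))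
             *m (invmx A0 *m SP^T *m A).
Proof.
move=> hXY; have e := gY hXY.
set K := invmx A0 *m SP^T *m A; set B := Y *m SQ.
by rewrite {1 2}e trmx_mul !mulmxA.
Qed.

Lemma gconst (X : 'M[R]_(D, p)) (Y : 'M[R]_(D, q)) j : gcomp X Y ->
  (rowD D A (theta j).1 *m (invmx (Y *m SQ) *m (invmx (Y *m SQ))^T)
     *m (rowD D A (theta j).2)^T) 0 0 = c j.
Proof.
case=> hXY hc; have := gval 1%:M j hXY.
by rewrite !mulmx1 hc => <-.
Qed.

Lemma symBEB (B E : 'M[R]_D) : E^T = E -> (B *m E *m B^T)^T = B *m E *m B^T.
Proof. by move=> Es; rewrite !trmx_mul trmxK Es mulmxA. Qed.

Lemma invBEB (B E : 'M[R]_D) : B \in unitmx ->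
  invmx B *m (B *m E *m B^T) *m (invmx B)^T = E.
Proof.
move=> uB; rewrite !mulmxA mulVmx // mul1mx -mulmxA -trmx_mul mulVmx //.
by rewrite trmx1 mulmx1.
Qed.

Lemma cz (C F : 'M[R]_D) : C \in unitmx -> C^T *m F *m C = 0 -> F = 0.
Proof.
move=> uC h; have := congr1 (fun M => invmx C^T *m M *m invmx C) h.
rewrite mulmx0 mul0mx !mulmxA mulVmx ?unitmx_tr // mul1mx -mulmxA mulmxV //.
by rewrite mulmx1.
Qed.

Theorem GT : (exists X Y, gcomp X Y) ->
  ((forall X Y X' Y', gcomp X Y -> gcomp X' Y' ->
      X^T *m X = X'^T *m X' /\ Y^T *m Y = Y'^T *m Y') <->
   \rank (Mcal St D A theta) = ((D * D.+1) %/ 2)%N).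
Proof.
move=> [X0 [Y0 g0]]; rewrite rank_crit; split.
  move=> U E Es hE.
  case: (g0) => hXY hc.
  set B := Y0 *m SQ; have [uB uC] := gunit hXY.
  set F := B *m E *m B^T.
  have Fs : F^T = F by apply: symBEB.
  have [t [t0 pd]] := posdef_perturb F.
  have Ssym : (1%:M + t *: F)^T = 1%:M + t *: F.
    by rewrite linearD /= linearZ /= Fs trmx1.
  have [Q eQ] := cholesky Ssym pd.
  have uQ : Q \in unitmx by apply: posdef_unit; rewrite -eQ.
  pose X := Q *m X0; pose Y := (invmx Q)^T *m Y0.
  have eXX : X^T *m X = X0^T *m (1%:M + t *: F) *m X0.
    by rewrite eQ /X trmx_mul !mulmxA.
  have eF : invmx B *m (t *: F) *m (invmx B)^T = t *: E.
    by rewrite /F -scalemxAr -scalemxAl invBEB.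
  have key : forall j, mxe (X0^T *m (t *: F) *m X0) (theta j).1 (theta j).2 = 0.
    move=> j; rewrite (gval _ j hXY) -/B eF -scalemxAr -scalemxAl mxE.
    by rewrite -frob_st // hE mulr0.
  have gX : gcomp X Y.
    split.
      rewrite /X /Y trmx_mul -mulmxA (mulmxA Q^T) -trmx_mul mulVmx //.
      by rewrite trmx1 mul1mx.
    move=> j; rewrite eXX mulmxDr mulmx1 mulmxDl mxeD hc key addr0.
    by [].
  have [hXX _] := U X0 Y0 X Y g0 gX.
  have hF : X0^T *m F *m X0 = 0.
    move: hXX; rewrite eXX mulmxDr mulmx1 mulmxDl -scalemxAr -scalemxAl.
    move/eqP; rewrite -subr_eq0 opprD addNKr oppr_eq0 scaler_eq0.
    by rewrite gt_eqF //= => /eqP.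
  have hF2 : F = 0.
    apply: (cz uC).
    have -> : (X0 *m SP)^T *m F *m (X0 *m SP) = SP^T *m (X0^T *m F *m X0) *m SP.
      by rewrite trmx_mul !mulmxA.
    by rewrite hF mulmx0 mul0mx.
  apply: (cz (C := B^T)); first by rewrite unitmx_tr.
  by rewrite trmxK.
move=> H X Y X' Y' g g'.
have [hXY hc] := g; have [hXY' hc'] := g'.
have [uB _] := gunit hXY; have [uB' _] := gunit hXY'.
set B := Y *m SQ; set B' := Y' *m SQ.
have ET : invmx B *m (invmx B)^T = invmx B' *m (invmx B')^T.
  apply/eqP; rewrite -subr_eq0; apply/eqP; apply: H.
    by rewrite linearB /= !trmx_mul !trmxK.
  move=> j /=; rewrite frob_st; last by rewrite linearB /= !trmx_mul !trmxK.
  rewrite mulmxBr mulmxBl mxE [X in _ + X]mxE.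
  by rewrite (gconst j g) (gconst j g') subrr.
split.
  by rewrite (gXX hXY) (gXX hXY') -/B -/B' ET.
by rewrite (gYY hXY) (gYY hXY') -/B -/B' !BtB // ET.
Qed.

End GT.
Section Fin.
Variable R : realType.

Lemma gram D p q (X : 'M[R]_(D, p)) (Y : 'M[R]_(D, q)) :
  (row_mx X Y)^T *m row_mx X Y = block_mx (X^T *m X) (X^T *m Y) (Y^T *m X) (Y^T *m Y).
Proof. by rewrite tr_row_mx mul_col_row. Qed.

Lemma rank_gram D W n (A : 'M[R]_(W, n)) (Pst : 'M[R]_(D, W)) (Pm : 'M[R]_(D, n)) :
  \rank A = D -> Pst^T *m Pm = A ->
  \rank ((row_mx Pst Pm)^T *m row_mx Pst Pm) = D.
Proof.
move=> hr hA; apply/eqP; rewrite eqn_leq; apply/andP; split.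
  apply: leq_trans (mxrankM_maxr _ _) _; exact: rank_leq_row.
have e : (row_mx 1%:M 0 : 'M[R]_(W, W + n)) *m ((row_mx Pst Pm)^T *m row_mx Pst Pm)
           *m (col_mx 0 1%:M : 'M[R]_(W + n, n)) = A.
  rewrite gram mul_row_block mul_row_col !mul1mx !mul0mx !addr0 mulmx0 add0r.
  by rewrite mulmx1.
rewrite -{1}hr -e; apply: leq_trans (mxrankM_maxl _ _) _.
exact: mxrankM_maxr.
Qed.

Lemma bridge N D p q (Comp : 'M[R]_N -> Prop) (Pr : 'M[R]_(D, p) -> 'M[R]_(D, q) -> Prop)
  (blk : 'M[R]_(D, p) -> 'M[R]_(D, q) -> 'M[R]_N) :
  (forall G, Comp G <-> exists X Y, G = blk X Y /\ Pr X Y) ->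
  (forall X Y X' Y', Pr X Y -> Pr X' Y' ->
     (blk X Y = blk X' Y' <-> (X^T *m X = X'^T *m X' /\ Y^T *m Y = Y'^T *m Y'))) ->
  (forall G, Comp G -> \rank G = D) -> (exists G, Comp G) ->
  ((exists! G, \rank G = D /\ Comp G) <->
   forall X Y X' Y', Pr X Y -> Pr X' Y' ->
     X^T *m X = X'^T *m X' /\ Y^T *m Y = Y'^T *m Y').
Proof.
move=> hC hB hR [G0 cG0]; split.
  move=> [G [[_ cG] uG]] X Y X' Y' pr pr'.
  apply/(hB _ _ _ _ pr pr').
  have c1 : Comp (blk X Y) by apply/hC; exists X, Y.
  have c2 : Comp (blk X' Y') by apply/hC; exists X', Y'.
  by rewrite -(uG _ (conj (hR _ c1) c1)) -(uG _ (conj (hR _ c2) c2)).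
move=> H; exists G0; split; first by split; [apply: hR|].
move=> G' [_ cG'].
have [X [Y [-> pr]]] := proj1 (hC _) cG0.
have [X' [Y' [-> pr']]] := proj1 (hC _) cG'.
by apply/(hB _ _ _ _ pr pr'); apply: H.
Qed.


Lemma mxe_tr m n (A : 'M[R]_(m, n)) i j : mxe A^T i j = mxe A j i.
Proof.
rewrite /mxe; case: (insub i : option 'I_n) => [i'|];
case: (insub j : option 'I_m) => [j'|] //=.
by rewrite mxE.
Qed.

Lemma topleft_tr D m n (A : 'M[R]_(m, n)) : topleft D A^T = (topleft D A)^T.
Proof. by apply/matrixP => k l; rewrite !mxE mxe_tr. Qed.

Lemma Mcal_tr D m n J (A : 'M[R]_(m, n)) (theta : 'I_J -> nat * nat) :
  Mcal Mo D A theta = Mcal St D A^T theta.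
Proof.
have hc : forall l, colD D A l = (rowD D A^T l)^T.
  by move=> l; apply/matrixP => k z; rewrite !mxE mxe_tr.
apply/matrixP => k j; rewrite !mxE /= /Nm /Nst !hc !trmxK.
by [].
Qed.

Lemma YtX D p q (A : 'M[R]_(p, q)) (X : 'M[R]_(D, p)) (Y : 'M[R]_(D, q)) :
  X^T *m Y = A -> Y^T *m X = A^T.
Proof. by move=> h; rewrite -h trmx_mul trmxK. Qed.

End Fin.

Unset Implicit Arguments.
Set Strict Implicit.

Theorem theorem2 (R : realType) (D W V K J : nat)
  (hD : (0 < D)%N) (hW : (0 < W)%N) (hV : (0 < V)%N) (hK : (0 < K)%N)
  (A : 'M[R]_(W, V * K))
  (hrank : \rank A = D) (hsub : \rank (topleft D A) = D)
  (s : sharp) (theta : 'I_J -> nat * nat)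
  (htheta : forall j : 'I_J,
     ((theta j).1 < bnd s W (V * K))%N /\ ((theta j).2 < bnd s W (V * K))%N)
  (c : 'I_J -> R)
  (hex : exists G : 'M[R]_(W + V * K), @compatible R s D W (V * K) J A theta c G) :
  (exists! G : 'M[R]_(W + V * K), \rank G = D /\ @compatible R s D W (V * K) J A theta c G) <->
  \rank (Mcal s D A theta) = ((D * D.+1) %/ 2)%N.
Proof.
have hW' : (D <= W)%N by rewrite -hrank rank_leq_row.
have hn : (D <= V * K)%N by rewrite -hrank rank_leq_col.
case: s htheta hex => htheta hex.
  have hex' : exists X Y, gcomp (D := D) A theta c X Y.
    by case: hex => G [Pst [Pm [_ hA hc]]]; exists Pst, Pm.
  rewrite -(GT hW' hn hsub htheta hex').
  apply: (bridge (blk := fun X Y => block_mx (X^T *m X) (X^T *m Y) (Y^T *m X) (Y^T *m Y))).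
  - move=> G; split.
      by move=> [Pst [Pm [-> hA hc]]]; exists Pst, Pm; rewrite gram.
    by move=> [X [Y [-> [hA hc]]]]; exists X, Y; rewrite gram.
  - move=> X Y X' Y' [hA _] [hA' _]; split.
      by case/eq_block_mx => -> _ _ ->.
    case=> -> ->; rewrite hA hA'.
    by rewrite (YtX hA) (YtX hA').
  - by move=> G [Pst [Pm [-> hA _]]]; exact: rank_gram hrank hA.
  - exact: hex.
have hsub' : \rank (topleft D A^T) = D by rewrite topleft_tr mxrank_tr.
have hex' : exists X Y, gcomp (D := D) A^T theta c X Y.
  case: hex => G [Pst [Pm [_ hA hc]]]; exists Pm, Pst; rewrite /gcomp; split => //.
  by rewrite -hA trmx_mul trmxK.
rewrite Mcal_tr -(GT hn hW' hsub' htheta hex').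
apply: (bridge (blk := fun X Y => block_mx (Y^T *m Y) (Y^T *m X) (X^T *m Y) (X^T *m X))).
- move=> G; split.
    move=> [Pst [Pm [-> hA hc]]]; exists Pm, Pst; rewrite gram; split => //.
    by rewrite /gcomp; split => //; rewrite -hA trmx_mul trmxK.
  move=> [X [Y [-> [hA hc]]]]; exists Y, X; rewrite gram; split => //.
  by rewrite (YtX hA) trmxK.
- move=> X Y X' Y' [hA _] [hA' _]; split.
    by case/eq_block_mx => -> _ _ ->.
  case=> -> ->; rewrite hA hA'.
  by rewrite (YtX hA) (YtX hA').
- by move=> G [Pst [Pm [-> hA _]]]; exact: rank_gram hrank hA.
- exact: hex.
Qed.
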